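(* For any $1\le s\le t$, the elements of $P(t,s)=P(t)P(t-1)\cdots P(s)$ are CD-rationals over $O((t-s+1)n\log n)$ bits, and every nonzero element of $P(t,s)$ is at least $n^{-O(n^2)}$.
   Context: For each $t\ge1$, $G_t$ is an undirected graph without self-loops on $\{1,\dots,n\}$ with degrees $d_i(t)$ and Laplacian $L_t$; $C_t=\mathrm{diag}(c_1(t),\dots,c_n(t))$ where each $c_i(t)$ is a rational encoded over $O(\log n)$ bits with $0<c_i(t)d_i(t)<1$; and $P(t)=I_n-C_tL_t$. A collection of numbers is a set of CD-rationals over $k$ bits if they can be written as $p_i/q$ with a common denominator $q$, all $p_i$ and $q$ being integers of $O(k)$ bits (the bound stated). $O(\cdot)$ hides absolute constants; $n$ is assumed large. *)

(* Defs.v *)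
From HB Require Import structures.
From mathcomp Require Import all_boot all_order all_algebra.
Set Implicit Arguments. Unset Strict Implicit. Unset Printing Implicit Defensive.
Import Order.TTheory GRing.Theory Num.Theory.
Local Open Scope ring_scope.

Definition fits_bits (z : int) (k : nat) : bool := (absz z < 2 ^ k)%N.

(* log_2 n, rounded up (the base and rounding only affect O-constants). *)
Definition log2 (n : nat) : nat := up_log 2 n.

Definition rat_over_bits (r : rat) (k : nat) : Prop :=
  exists (p q : int), (0 < q) /\ fits_bits p k /\ fits_bits q k /\ r = p%:~R / q%:~R.

(* A family of numbers (the entries of an n x n matrix) is a set of CD-rationals
   over k bits: common denominator q, all numerators and q of <= k bits. *)
Definition CD_rationals_mx (n : nat) (M : 'M[rat]_n) (k : nat) : Prop :=
  exists (q : int) (p : 'I_n -> 'I_n -> int),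
    (0 < q) /\ fits_bits q k /\
    (forall i j, fits_bits (p i j) k) /\
    (forall i j, M i j = (p i j)%:~R / q%:~R).

Definition simple_graph (n : nat) (E : rel 'I_n) : Prop :=
  (forall i j, E i j = E j i) /\ (forall i, E i i = false).

Definition deg (n : nat) (E : rel 'I_n) (i : 'I_n) : nat := #|[set j | E i j]|.

Definition laplacian (n : nat) (E : rel 'I_n) : 'M[rat]_n :=
  \matrix_(i, j) ((if i == j then (deg E i)%:R else 0) - (if E i j then 1 else 0)).

Definition Pmat (n : nat) (E : nat -> rel 'I_n) (c : nat -> 'I_n -> rat) (t : nat)
  : 'M[rat]_n :=
  1%:M - diag_mx (\row_i c t i) *m laplacian (E t).

(* Pprod s k = P(s+k) P(s+k-1) ... P(s) *)
Fixpoint Pprod (n : nat) (E : nat -> rel 'I_n) (c : nat -> 'I_n -> rat) (s k : nat)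
  : 'M[rat]_n :=
  match k with
  | 0 => Pmat E c s
  | k'.+1 => Pmat E c (s + k'.+1) *m Pprod E c s k'
  end.

Definition Pts (n : nat) (E : nat -> rel 'I_n) (c : nat -> 'I_n -> rat) (t s : nat)
  : 'M[rat]_n := Pprod E c s (t - s).

(* Main.v *)
Require Import Defs.
From HB Require Import structures.
From mathcomp Require Import all_boot all_order all_algebra.
From mathcomp Require Import zify.
Set Implicit Arguments. Unset Strict Implicit. Unset Printing Implicit Defensive.
Import Order.TTheory GRing.Theory Num.Theory.
Local Open Scope ring_scope.

Lemma Pmat_E n (E : nat -> rel 'I_n) c t i j : E t i i = false ->
  Pmat E c t i j = if i == j then 1 - c t i * (deg (E t) i)%:R
                   else (if E t i j then c t i else 0).
Proof.
move=> Eii; rewrite /Pmat mul_diag_mx !mxE.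
case: eqP => [<-|_]; first by rewrite Eii subr0.
by rewrite sub0r add0r mulrN opprK; case: (E t i j); rewrite ?mulr1 ?mulr0.
Qed.

Definition ones n : 'cV[rat]_n := const_mx 1.

Definition good n (beta : rat) (B : nat) (P : 'M[rat]_n) : Prop :=
  [/\ forall i j, 0 <= P i j,
      forall i j, P i j != 0 -> beta <= P i j,
      forall i j, (P i j != 0) = (P j i != 0) &
      [/\ forall i, P i i != 0,
      P *m ones n = ones n &
      exists D : nat, [/\ (0 < D)%N, (D <= B)%N &
         forall i j, D%:R * P i j \is a Num.int]]].

Definition supp n (M : 'M[rat]_n) j := [set k | M k j != 0].

Definition Inv n (beta : rat) (B : nat) (m : nat) (M : 'M[rat]_n) : Prop :=
  [/\ forall i j, 0 <= M i j,
      M *m ones n = ones n,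
      (exists D : nat, [/\ (0 < D)%N, (D <= B ^ m)%N &
         forall i j, D%:R * M i j \is a Num.int]) &
      forall i j, M i j != 0 -> beta ^+ (#|supp M j|.-1) <= M i j].

Lemma rowsum n (M : 'M[rat]_n) i : M *m ones n = ones n -> \sum_k M i k = 1.
Proof.
move/matrixP => /(_ i ord0); rewrite !mxE => <-.
by apply: eq_bigr => k _; rewrite mxE mulr1.
Qed.

Lemma le_rowsum n (M : 'M[rat]_n) i j : (forall i j, 0 <= M i j) ->
  M *m ones n = ones n -> M i j <= 1.
Proof.
move=> M0 M1; rewrite -(rowsum i M1) (bigD1 j) //= lerDl.
by apply: sumr_ge0 => k _.
Qed.

Lemma Pmat_off n (E : nat -> rel 'I_n) c t i j : i != j ->
  Pmat E c t i j = if E t i j then c t i else 0.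
Proof.
move=> ij; rewrite /Pmat mul_diag_mx !mxE (negbTE ij).
by rewrite sub0r add0r mulrN opprK; case: (E t i j); rewrite ?mulr1 ?mulr0.
Qed.

Lemma Pmat_diag n (E : nat -> rel 'I_n) c t i : E t i i = false ->
  Pmat E c t i i = 1 - c t i * (deg (E t) i)%:R.
Proof. by move=> Eii; rewrite /Pmat mul_diag_mx !mxE eqxx Eii subr0. Qed.

Lemma rowsum_ones n (M : 'M[rat]_n) : (forall i, \sum_j M i j = 1) -> M *m ones n = ones n.
Proof.
move=> h; apply/matrixP => i k; rewrite !mxE -[RHS](h i).
by apply: eq_bigr => j _; rewrite mxE mulr1.
Qed.

Lemma Inv_1 n beta B : Inv beta B 0 (1%:M : 'M[rat]_n).
Proof.
split.
- by move=> i j; rewrite mxE; case: eqP.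
- by rewrite mul1mx.
- exists 1%N; split => // i j; rewrite mul1r mxE; case: eqP => _; 
  [exact: rpred1 | exact: rpred0].
- move=> i j; have -> : supp 1%:M j = [set j].
    by apply/setP => k; rewrite !inE mxE; case: (k == j); rewrite ?oner_eq0 ?eqxx.
  by rewrite cards1 expr0 mxE; case: (i == j).
Qed.

Lemma Inv_step n beta B m (P M : 'M[rat]_n) : 0 < beta -> beta <= 1 ->
  good beta B P -> Inv beta B m M -> Inv beta B m.+1 (P *m M).
Proof.
move=> b0 b1 [P0 Pb Psym [Pd P1 [DP [DP0 DPB DPi]]]] [M0 M1 [DM [DM0 DMB DMi]] Mb].
have PM0 : forall i j, 0 <= (P *m M) i j.
  by move=> i j; rewrite mxE; apply: sumr_ge0 => k _; apply: mulr_ge0.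
have term : forall i j k, P i k * M k j <= (P *m M) i j.
  move=> i j k; rewrite mxE (bigD1 k) //= lerDl.
  by apply: sumr_ge0 => l _; apply: mulr_ge0.
split => //.
- by rewrite -mulmxA M1.
- exists (DP * DM)%N; split; first by rewrite muln_gt0 DP0.
    by rewrite expnS leq_mul.
  move=> i j; rewrite mxE mulr_sumr; apply: rpred_sum => k _.
  rewrite natrM mulrACA; exact: rpredM.
move=> i j.
set x := supp M j; set y := supp (P *m M) j.
have pos' : forall a b : 'I_n, a == a -> P a b != 0 -> M b j != 0 -> 0 < P a b * M b j.
  by move=> a b _ ha hb; rewrite lt0r mulf_neq0 //= mulr_ge0.
have sub : x \subset y.
  apply/subsetP => k; rewrite !inE => Mk; apply: lt0r_neq0.
  exact: lt_le_trans (pos' _ _ (eqxx k) (Pd k) Mk) (term k j k).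
have le_xy := subset_leq_card sub.
move: le_xy; rewrite leq_eqVlt => /orP [eqxy|ltxy] nz.
  have xy : x = y by apply/eqP; rewrite eqEcard sub (eqP eqxy) leqnn.
  rewrite -/y -xy.
  have iy : i \in y by rewrite inE.
  have Mi : M i j != 0 by move: iy; rewrite -xy inE.
  have Mk : forall k, P i k != 0 -> M k j != 0.
    move=> k Pik; have : k \in y.
      rewrite inE; apply: lt0r_neq0.
      by apply: lt_le_trans (term k j i); apply: pos' => //; rewrite -Psym.
    by rewrite -xy inE.
  rewrite mxE -[X in X <= _]mul1r -(rowsum i P1) mulr_suml.
  apply: ler_sum => k _.
  have [Pik0|Pik] := eqVneq (P i k) 0; first by rewrite Pik0 !mul0r.
  by apply: ler_wpM2l => //; apply: Mb; apply: Mk.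
case: (pickP (fun k => P i k * M k j != 0)) => [k hk | all0]; last first.
  move: nz; rewrite mxE big1 ?eqxx // => k _.
  by move: (all0 k) => /= /negbFE /eqP.
move: hk; rewrite mulf_eq0 negb_or => /andP [Pik Mkj].
have x0 : (0 < #|x|)%N by apply/card_gt0P; exists k; rewrite inE.
apply: le_trans (term i j k).
apply: (@le_trans _ _ (beta ^+ #|x|)).
  apply: ler_wiXn2l; [exact: ltW | exact: b1 |].
  by rewrite -ltnS prednK // (leq_ltn_trans _ ltxy).
rewrite -(prednK x0) exprS.
apply: ler_pM => //; [exact: ltW | exact: exprn_ge0 (ltW b0) | by apply: Pb | by apply: Mb].
Qed.

Lemma lowb (x : rat) (Q B : nat) : 0 < x -> (0 < Q)%N -> (Q <= B)%N ->
  x * Q%:R \is a Num.int -> (B%:R)^-1 <= x.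
Proof.
move=> x0 Q0 QB xi.
have B0 : (0 < B)%N by apply: leq_trans QB.
rewrite -div1r ler_pdivrMr ?ltr0n //.
have h1 : 1 <= x * Q%:R.
  have := norm_intr_ge1 xi; rewrite ger0_norm; last by rewrite mulr_ge0 // ltW.
  apply; rewrite mulf_neq0 //; first exact: lt0r_neq0.
  by rewrite pnatr_eq0 -lt0n.
by apply: le_trans h1 _; apply: ler_wpM2l; [exact: ltW | rewrite ler_nat].
Qed.

Lemma good_Pmat n (E : nat -> rel 'I_n) c t (K : nat) :
  simple_graph (E t) -> (forall i, rat_over_bits (c t i) K) ->
  (forall i, 0 < c t i * (deg (E t) i)%:R < 1) ->
  good ((2 ^ K)%:R)^-1 ((2 ^ K) ^ n) (Pmat E c t).
Proof.
move=> [Esym Eirr] cb cd.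
set B := (2 ^ K)%N.
have hQ : forall i, exists Q : nat, [/\ (0 < Q)%N, (Q <= B)%N & c t i * Q%:R \is a Num.int].
  move=> i; case: (cb i) => p [q [q0 [_ [qb ->]]]].
  case: q q0 qb => [Q|Q] // Q0 Qb; exists Q; split => //; first exact: ltnW Qb.
  have -> : (Q%:~R : rat) = Q%:R by [].
  rewrite mulfVK; first exact: intr_int.
  by rewrite pnatr_eq0 -lt0n -ltz_nat.
have [Q HQ] := fin_all_exists hQ.
have c0 : forall i, 0 < c t i.
  move=> i; have /andP [h _] := cd i.
  case: (posnP (deg (E t) i)) => [d0|d0]; first by move: h; rewrite d0 mulr0 ltxx.
  by move: h; rewrite pmulr_lgt0 // ltr0n.
have cd0 : forall i, 0 < 1 - c t i * (deg (E t) i)%:R.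
  by move=> i; have /andP [_ h] := cd i; rewrite subr_gt0.
have cQ : forall i, c t i * (Q i)%:R \is a Num.int by move=> i; case: (HQ i).
have PE := fun i j => @Pmat_E n E c t i j (Eirr i).
split.
- move=> i j; rewrite PE; case: eqP => _; first exact: ltW.
  by case: (E t i j) => //; exact: ltW.
- move=> i j; rewrite PE; case: (HQ i) => Q0 QB _.
  case: (eqVneq i j) => [_|ij] nz.
    apply: (lowb (cd0 i) Q0 QB).
    by rewrite mulrBl mul1r mulrAC; apply: rpredB; [exact: natr_int | apply: rpredM; [exact: cQ | exact: natr_int]].
  by move: nz; case: (E t i j) => [_|]; [exact: (lowb (c0 i) Q0 QB) | rewrite eqxx].
- move=> i j; case: (eqVneq i j) => [->|ij]; first by [].
  rewrite Pmat_off // Pmat_off 1?eq_sym // Esym.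
  by case: (E t j i); rewrite ?eqxx // (lt_eqF (c0 i)) (gt_eqF (c0 j)).
split.
- by move=> i; rewrite Pmat_diag // lt0r_neq0.
- apply: rowsum_ones => i; rewrite (bigD1 i) //= Pmat_diag //.
  have -> : \sum_(j | j != i) Pmat E c t i j = \sum_j (if E t i j then c t i else 0).
    rewrite [RHS](bigD1 i) //= Eirr add0r; apply: eq_bigr => j ji.
    by rewrite Pmat_off // eq_sym.
  by rewrite -big_mkcond /= sumr_const /deg cardsE -[c t i *+ _]mulr_natr subrK.
exists (\prod_i Q i)%N; split.
- by rewrite prodn_gt0 // => i; case: (HQ i).
- apply: (@leq_trans (\prod_(i < n) B)); first by apply: leq_prod => i _; case: (HQ i).
  by rewrite prod_nat_const card_ord.
have Dc : forall i, (\prod_k Q k)%:R * c t i \is a Num.int.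
  move=> i; rewrite (bigD1 i) //= natrM mulrC mulrA.
  by apply: rpredM; [exact: cQ | exact: natr_int].
move=> i j; case: (eqVneq i j) => [<-|ij].
  rewrite Pmat_diag // mulrBr mulr1 mulrA.
  by apply: rpredB; [exact: natr_int | apply: rpredM; [exact: Dc | exact: natr_int]].
rewrite Pmat_off //; case: (E t i j); rewrite ?mulr0 //; exact: rpred0.
Qed.

Lemma Inv_Pprod n (E : nat -> rel 'I_n) c s K :
  (1 <= s)%N ->
  (forall t, (1 <= t)%N -> simple_graph (E t)) ->
  (forall t i, (1 <= t)%N -> rat_over_bits (c t i) K) ->
  (forall t i, (1 <= t)%N -> 0 < c t i * (deg (E t) i)%:R < 1) ->
  forall k, Inv ((2 ^ K)%:R)^-1 ((2 ^ K) ^ n) k.+1 (Pprod E c s k).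
Proof.
move=> s1 hE hc hd.
have b0 : 0 < ((2 ^ K)%:R : rat)^-1 by rewrite invr_gt0 ltr0n expn_gt0.
have b1 : ((2 ^ K)%:R : rat)^-1 <= 1 by rewrite invf_le1 ?ler1n ?ltr0n expn_gt0.
have G : forall t, (s <= t)%N -> good ((2 ^ K)%:R)^-1 ((2 ^ K) ^ n) (Pmat E c t).
  move=> t st; have t1 : (1 <= t)%N by apply: leq_trans st.
  apply: good_Pmat; [exact: hE | move=> i; exact: hc | move=> i; exact: hd].
elim => [|k IH] /=.
  rewrite -[Pmat E c s]mulmx1; apply: Inv_step => //; first exact: G.
  exact: Inv_1.
by apply: Inv_step => //; apply: G; rewrite leq_addr.
Qed.

Lemma leq_base (m k e : nat) : (m <= k)%N -> (m ^ e <= k ^ e)%N.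
Proof. by move=> mk; elim: e => // e IH; rewrite !expnS leq_mul. Qed.

Theorem lemma3p1 :
  forall a : nat, (* constant in the O(log n) bit bound for the c_i(t) *)
  exists b e N : nat,
  forall (n : nat), (N <= n)%N ->
  forall (E : nat -> rel 'I_n) (c : nat -> 'I_n -> rat),
    (forall t, (1 <= t)%N -> simple_graph (E t)) ->
    (forall t i, (1 <= t)%N -> rat_over_bits (c t i) (a * log2 n)) ->
    (forall t i, (1 <= t)%N -> 0 < c t i * (deg (E t) i)%:R < 1) ->
  forall s t : nat, (1 <= s)%N -> (s <= t)%N ->
    CD_rationals_mx (Pts E c t s) (b * (t - s + 1) * n * log2 n) /\
    (forall i j, Pts E c t s i j != 0 ->
       (n%:R : rat) ^- (e * n ^ 2) <= Pts E c t s i j).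
Proof.
move=> a; exists (a + 1)%N, (2 * a)%N, 2%N => n n2 E c hE hc hd s t s1 st.
set L := log2 n.
have L1 : (0 < L)%N by rewrite /L /log2 up_log_gt0 n2.
have [M0 M1 [D [D0 DB Di]] Mb] := Inv_Pprod s1 hE hc hd (t - s).
rewrite /Pts; set M := Pprod E c s (t - s).
have Mle1 := fun i j => le_rowsum i j M0 M1.
split.
- exists (Posz D), (fun i j => Num.floor (D%:R * M i j)).
  have hB : (D < 2 ^ ((a + 1) * (t - s + 1) * n * L))%N.
    apply: leq_ltn_trans DB _; rewrite -!expnM ltn_exp2l // /L; move: L1; rewrite /L; nia.
  have fl : forall i j, ((Num.floor (D%:R * M i j))%:~R : rat) = D%:R * M i j.
    by move=> i j; apply/eqP; rewrite -intrEfloor.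
  split; first by rewrite ltz_nat.
  split; first exact: hB.
  split.
  + move=> i j; rewrite /fits_bits.
    have h0 : 0 <= ((Num.floor (D%:R * M i j))%:~R : rat) by rewrite fl mulr_ge0.
    have h1 : ((Num.floor (D%:R * M i j))%:~R : rat) <= (Posz D)%:~R.
      rewrite fl; change ((Posz D)%:~R : rat) with (D%:R : rat).
      by rewrite -[X in _ <= X]mulr1 ler_wpM2l.
    move: h0 h1; rewrite ler0z ler_int.
    case: (Num.floor _) => // k _; rewrite lez_nat => kD.
    exact: leq_ltn_trans kD hB.
  + move=> i j; rewrite fl; change ((Posz D)%:~R : rat) with (D%:R : rat).
    by rewrite [D%:R * _]mulrC mulfK // pnatr_eq0 -lt0n.
- move=> i j nz; apply: le_trans (Mb i j nz).
  rewrite exprVn -natrX lef_pV2 ?posrE ?exprn_gt0 ?ltr0n ?expn_gt0 ?(ltnW n2) //.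
  rewrite -natrX ler_nat.
  have sn : (#|supp M j|.-1 <= n)%N.
    by apply: leq_trans (leq_pred _) _; apply: leq_trans (max_card _) _; rewrite card_ord.
  have LL : (2 ^ L <= n ^ 2)%N.
    have := up_log_gtn (isT : (1 < 2)%N) n2; rewrite -/(log2 n) -/L => h.
    have -> : (2 ^ L = 2 * 2 ^ L.-1)%N by rewrite -expnS prednK.
    move: h; set X := (2 ^ L.-1)%N => h; nia.
  apply: (@leq_trans ((2 ^ (a * L)) ^ n)); first by apply: leq_pexp2l; rewrite ?expn_gt0.
  rewrite -expnM mulnAC expnM expnAC.
  apply: (@leq_trans ((n ^ 2) ^ (a * n))); first exact: leq_base.
  rewrite -expnM leq_pexp2l ?(leq_trans _ n2) //; nia.
Qed.
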